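(* Consider the gradient flow $\frac{d}{dt}\mathbf w=-(I_d-\mathbf w\mathbf w^T)\nabla L(\mathbf w)$ started from a unit vector $\mathbf w(0)$, and let $\mathbf u(t)=V^T\mathbf w(t)\in\mathbb R^k$. Consider the regime in which $d$ is large while $k$, the matrix $A=V^TV$ and the activations $\sigma,\sigma^*$ are fixed (independent of $d$). Assume $\mathbf u_j(0)>0$ and $\mathbf u_j(0)=\Theta(d^{-1/2})$ for all $j\in[k]$, and $p^*\ge 2$. Then: (i) if $p^*\ge 3$, a time $T=\Theta(d^{p^*/2-1})$ is necessary and sufficient to reach $\|\mathbf u(T)\|_2=\Theta(1)$; (ii) if $p^*=2$, a time $T=\Theta(\log d)$ is necessary and sufficient to reach $\|\mathbf u(T)\|_2=\Theta(1)$.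
   Context: Let $h_0=1,h_1(x)=x,h_2(x)=(x^2-1)/\sqrt2,\dots$ be the probabilist's Hermite polynomials normalized to be orthonormal in $L^2$ of the standard Gaussian measure on $\mathbb R$. Let $\sigma,\sigma^*:\mathbb R\to\mathbb R$ be square integrable with respect to the standard Gaussian, with expansions $\sigma=\sum_{p\ge1}a_ph_p$, $\sigma^*=\sum_{p\ge1}b_ph_p$. The information exponent of $\sigma^*$ is $p^*=\min\{p\ge1:b_p\neq0\}$; write $c_p=a_pb_p$. Standing assumptions: $c_{p^*}>0$ and $c_p\ge0$ for all $p\ge p^*$. Let $\mathbf v_1,\dots,\mathbf v_k\in\mathbb R^d$ be linearly independent unit vectors (index vectors), $V=[\mathbf v_1,\dots,\mathbf v_k]$, $A=V^TV$, with $\sum_{p\ge p^*}c_p\,p\,\lambda_{\max}(A)^{p/2}<\infty$, and with $\mathbf v_j^T\mathbf v_{j'}\ge0$ for all $j,j'\in[k]$. The correlation loss is $L(\mathbf w)=C-\mathbb E_{\mathbf x\sim\mathcal N(0,I_d)}\big[\sigma(\mathbf w^T\mathbf x)\sum_{j=1}^k\sigma^*(\mathbf v_j^T\mathbf x)\big]$ for a constant $C$; for unit $\mathbf w$ it equals $C-\sum_{p\ge p^*}c_p\sum_{j=1}^k(\mathbf v_j^T\mathbf w)^p$, and this formula defines $L$ and its Euclidean gradient $\nabla L$ on $\mathbb R^d$. The $\Theta(\cdot)$ statements hide constants independent of $d$. *)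

(* Defs.v *)
From Stdlib Require Import Reals.
From Coquelicot Require Import Coquelicot.
Open Scope R_scope.

(* Vectors of R^n are represented as functions nat -> R; only the
   coordinates 0..n-1 are relevant. *)

Fixpoint fsum (n : nat) (f : nat -> R) : R :=
  match n with
  | O => 0
  | S m => fsum m f + f m
  end.

Definition dot (n : nat) (x y : nat -> R) : R := fsum n (fun i => x i * y i).
Definition norm2 (n : nat) (x : nat -> R) : R := sqrt (dot n x x).

(* c_p = a_p b_p, where (a_p), (b_p) are the Hermite coefficients of
   sigma and sigma^* (w.r.t. the orthonormal Hermite polynomials h_p). *)
Definition ccoef (a b : nat -> R) (p : nat) : R := a p * b p.

Definition info_exponent (b : nat -> R) (pstar : nat) : Prop :=
  (1 <= pstar)%nat /\ b pstar <> 0 /\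
  (forall p, (1 <= p)%nat -> (p < pstar)%nat -> b p = 0).

Definition is_eigenvalue (k : nat) (A : nat -> nat -> R) (lam : R) : Prop :=
  exists x : nat -> R, (exists j, (j < k)%nat /\ x j <> 0) /\
    forall i, (i < k)%nat -> fsum k (fun j => A i j * x j) = lam * x i.

Definition is_lambda_max (k : nat) (A : nat -> nat -> R) (lam : R) : Prop :=
  is_eigenvalue k A lam /\ (forall mu, is_eigenvalue k A mu -> mu <= lam).

(* derivative of s |-> sum_p c_p s^p, i.e.  sum_p p c_p s^(p-1) *)
Definition dpot (a b : nat -> R) (s : R) : R :=
  Series (fun p => INR p * ccoef a b p * s ^ (p - 1)).

(* Euclidean gradient of L(w) = C - sum_p c_p sum_j (v_j^T w)^p on R^d,
   V j = v_j : (i-th coordinate V j i). *)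
Definition gradL (a b : nat -> R) (d k : nat) (V : nat -> nat -> R)
    (w : nat -> R) : nat -> R :=
  fun i => - fsum k (fun j => dpot a b (dot d (V j) w) * V j i).

Definition flow_field (a b : nat -> R) (d k : nat) (V : nat -> nat -> R)
    (w : nat -> R) : nat -> R :=
  fun i => - (gradL a b d k V w i - w i * dot d w (gradL a b d k V w)).

Definition is_flow (a b : nat -> R) (d k : nat) (V : nat -> nat -> R)
    (w : R -> nat -> R) : Prop :=
  (forall i, (i < d)%nat ->
     filterlim (fun t => w t i) (at_right 0) (locally (w 0 i))) /\
  (forall t, 0 < t -> forall i, (i < d)%nat ->
     is_derive (fun s => w s i) t (flow_field a b d k V (w t) i)) /\
  (forall t, 0 <= t -> dot d (w t) (w t) = 1).

Definition u_of (d : nat) (V : nat -> nat -> R) (w : R -> nat -> R) (t : R) :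
  nat -> R := fun j => dot d (V j) (w t).
Definition unorm (d k : nat) (V : nat -> nat -> R) (w : R -> nat -> R) (t : R) : R :=
  norm2 k (u_of d V w t).

Definition admissible (a b : nat -> R) (k : nat) (A : nat -> nat -> R)
    (c1 c2 : R) (d : nat) (V : nat -> nat -> R) (w : R -> nat -> R) : Prop :=
  (forall j, (j < k)%nat -> dot d (V j) (V j) = 1) /\
  (forall alpha : nat -> R,
     (forall i, (i < d)%nat -> fsum k (fun j => alpha j * V j i) = 0) ->
     forall j, (j < k)%nat -> alpha j = 0) /\
  (forall j j', (j < k)%nat -> (j' < k)%nat -> dot d (V j) (V j') = A j j') /\
  (forall j j', (j < k)%nat -> (j' < k)%nat -> 0 <= dot d (V j) (V j')) /\
  is_flow a b d k V w /\
  (forall j, (j < k)%nat ->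
     0 < u_of d V w 0 j /\
     c1 / sqrt (INR d) <= u_of d V w 0 j <= c2 / sqrt (INR d)).

(* "A time T = Theta(S d) is necessary and sufficient to reach ||u(T)|| = Theta(1)" *)
Definition escape_time_Theta (a b : nat -> R) (k : nat) (A : nat -> nat -> R)
    (S : nat -> R) : Prop :=
  forall c1 c2 : R, 0 < c1 -> c1 <= c2 ->
  (exists delta Delta C : R, exists D0 : nat,
     0 < delta /\ 0 < C /\
     forall d : nat, (D0 <= d)%nat ->
     forall V w, admissible a b k A c1 c2 d V w ->
       delta <= unorm d k V w (C * S d) <= Delta) /\
  (forall delta : R, 0 < delta ->
   exists c : R, exists D0 : nat, 0 < c /\
     forall d : nat, (D0 <= d)%nat ->
     forall V w, admissible a b k A c1 c2 d V w ->
     forall t, 0 <= t <= c * S d -> unorm d k V w t < delta).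

(* Main.v *)
Require Import Defs.
From Stdlib Require Import Reals Lra Lia Classical Arith ZArith.
From Coquelicot Require Import Coquelicot.
Open Scope R_scope.


Lemma fsum_ext n f g : (forall i, (i < n)%nat -> f i = g i) -> fsum n f = fsum n g.
Proof.
  induction n; intros H; simpl; [reflexivity|].
  rewrite IHn by (intros; apply H; lia). rewrite (H n) by lia. reflexivity.
Qed.

Lemma fsum_plus n f g : fsum n (fun i => f i + g i) = fsum n f + fsum n g.
Proof. induction n; simpl; [ring| rewrite IHn; ring]. Qed.

Lemma fsum_minus n f g : fsum n (fun i => f i - g i) = fsum n f - fsum n g.
Proof. induction n; simpl; [ring| rewrite IHn; ring]. Qed.

Lemma fsum_scal n c f : fsum n (fun i => c * f i) = c * fsum n f.
Proof. induction n; simpl; [ring| rewrite IHn; ring]. Qed.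

Lemma fsum_zero n : fsum n (fun _ => 0) = 0.
Proof. induction n; simpl; [ring| rewrite IHn; ring]. Qed.

Lemma fsum_swap n m (f : nat -> nat -> R) :
  fsum n (fun i => fsum m (fun j => f i j)) = fsum m (fun j => fsum n (fun i => f i j)).
Proof.
  induction n; simpl.
  - rewrite fsum_zero; reflexivity.
  - rewrite IHn. rewrite <- fsum_plus. reflexivity.
Qed.

Lemma fsum_le n f g : (forall i, (i < n)%nat -> f i <= g i) -> fsum n f <= fsum n g.
Proof.
  induction n; intros H; simpl; [lra|].
  assert (fsum n f <= fsum n g) by (apply IHn; intros; apply H; lia).
  assert (f n <= g n) by (apply H; lia). lra.
Qed.

Lemma fsum_nonneg n f : (forall i, (i < n)%nat -> 0 <= f i) -> 0 <= fsum n f.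
Proof.
  intros H. rewrite <- (fsum_zero n). apply fsum_le. exact H.
Qed.

Lemma fsum_ge_term n f j : (forall i, (i < n)%nat -> 0 <= f i) -> (j < n)%nat -> f j <= fsum n f.
Proof.
  induction n; intros H Hj; simpl; [lia|].
  destruct (Nat.eq_dec j n) as [->|Hne].
  - assert (0 <= fsum n f) by (apply fsum_nonneg; intros; apply H; lia). lra.
  - assert (f j <= fsum n f) by (apply IHn; [intros; apply H; lia| lia]).
    assert (0 <= f n) by (apply H; lia). lra.
Qed.

Lemma fsum_const_le n f M : (forall i, (i < n)%nat -> f i <= M) -> fsum n f <= INR n * M.
Proof.
  induction n; intros H; simpl fsum; [simpl; lra|].
  assert (fsum n f <= INR n * M) by (apply IHn; intros; apply H; lia).
  assert (f n <= M) by (apply H; lia). rewrite S_INR. lra.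
Qed.

Lemma fsum_lt_const n f M : (0 < n)%nat -> (forall i, (i < n)%nat -> f i < M) -> fsum n f < INR n * M.
Proof.
  induction n; intros Hn H; [lia|]. simpl fsum. rewrite S_INR.
  destruct n.
  - simpl. assert (f 0%nat < M) by (apply H; lia). lra.
  - assert (fsum (S n) f < INR (S n) * M) by (apply IHn; [lia| intros; apply H; lia]).
    assert (f (S n) < M) by (apply H; lia). lra.
Qed.

Lemma fsum_exists_ge n f M : (0 < n)%nat -> INR n * M <= fsum n f ->
  exists j, (j < n)%nat /\ M <= f j.
Proof.
  intros Hn H. apply NNPP; intros Hno.
  assert (Hlt: forall i, (i < n)%nat -> f i < M).
  { intros i Hi. apply Rnot_le_lt. intros Hle. apply Hno. exists i. split; auto. }
  pose proof (fsum_lt_const n f M Hn Hlt). lra.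
Qed.

Lemma is_derive_fsum n (f : nat -> R -> R) df t :
  (forall i, (i < n)%nat -> is_derive (f i) t (df i)) ->
  is_derive (fun s => fsum n (fun i => f i s)) t (fsum n df).
Proof.
  induction n; intros H; simpl.
  - exact (is_derive_const (K:=R_AbsRing) (V:=R_NormedModule) 0 t).
  - exact (is_derive_plus (fun s => fsum n (fun i => f i s)) (f n) t _ _
      (IHn (fun i Hi => H i (Nat.lt_lt_succ_r _ _ Hi))) (H n (Nat.lt_succ_diag_r n))).
Qed.

Lemma continuous_fsum n (f : nat -> R -> R) t :
  (forall i, (i < n)%nat -> continuous (f i) t) ->
  continuous (fun s => fsum n (fun i => f i s)) t.
Proof.
  induction n; intros H; simpl.
  - exact (continuous_const (U:=R_UniformSpace) (V:=R_NormedModule) 0 t).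
  - exact (continuous_plus (fun s => fsum n (fun i => f i s)) (f n) t
      (IHn (fun i Hi => H i (Nat.lt_lt_succ_r _ _ Hi))) (H n (Nat.lt_succ_diag_r n))).
Qed.


Lemma MVT_open f df a b : a < b ->
  (forall c, a < c < b -> is_derive f c (df c)) ->
  (forall c, a <= c <= b -> continuity_pt f c) ->
  exists c, a < c < b /\ f b - f a = df c * (b - a).
Proof.
  intros Hab Hd Hc.
  pose (pr1 := fun c (P : a < c < b) =>
    exist (fun l => derivable_pt_abs f c l) (df c) (proj1 (is_derive_Reals _ _ _) (Hd c P))).
  pose (pr2 := fun c (P : a < c < b) => derivable_pt_id c).
  destruct (MVT f id a b pr1 pr2 Hab Hc (fun c _ => derivable_continuous_pt _ _ (derivable_pt_id c)))
    as [c [P HP]].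
  exists c. split; [exact P|].
  unfold pr2 in HP. rewrite derive_pt_id in HP. simpl in HP. unfold id in HP. lra.
Qed.

Lemma cont_eps h m : continuous h m -> forall eps, 0 < eps ->
  exists del, 0 < del /\ forall t, Rabs (t - m) < del -> Rabs (h t - h m) < eps.
Proof.
  intros Hc eps He. apply continuity_pt_filterlim in Hc.
  destruct (Hc eps He) as [del [Hdel H]].
  exists del. split; [exact Hdel|]. intros t Ht.
  destruct (Req_dec t m) as [->|Hne].
  - rewrite Rminus_eq_0, Rabs_R0. exact He.
  - apply (H t). split; [unfold D_x, no_cond; split; auto|]. exact Ht.
Qed.

Lemma last_below h a b y : a <= b -> (forall t, a <= t <= b -> continuous h t) -> h a <= y ->
  exists s, a <= s <= b /\ h s <= y /\ forall t, s < t <= b -> y < h t.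
Proof.
  intros Hab Hc Ha.
  set (E := fun t => a <= t <= b /\ h t <= y).
  assert (Hb : bound E) by (exists b; intros t [[_ Ht] _]; exact Ht).
  assert (He : exists x, E x) by (exists a; split; [lra|exact Ha]).
  destruct (completeness E Hb He) as [m [Hub Hlub]].
  assert (Ham : a <= m) by (apply Hub; split; [lra|exact Ha]).
  assert (Hmb : m <= b) by (apply Hlub; intros t [[_ Ht] _]; exact Ht).
  exists m. split; [lra|]. split.
  - apply Rnot_lt_le. intros Hgt.
    destruct (cont_eps h m (Hc m (conj Ham Hmb)) (h m - y)) as [del [Hdel Hd]]; [lra|].
    assert (m <= m - del / 2); [|lra].
    apply Hlub. intros t [Ht Hty].
    apply Rnot_lt_le. intros Hlt.
    assert (t <= m) by (apply Hub; split; auto).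
    assert (Rabs (t - m) < del) by (rewrite Rabs_left1 by lra; lra).
    specialize (Hd t H0). rewrite Rabs_lt_between in Hd. lra.
  - intros t Ht. apply Rnot_le_lt. intros Hle.
    assert (t <= m) by (apply Hub; split; [lra|exact Hle]). lra.
Qed.

Lemma first_above h a b y : a <= b -> (forall t, a <= t <= b -> continuous h t) -> y <= h b ->
  exists s, a <= s <= b /\ y <= h s /\ forall t, a <= t < s -> h t < y.
Proof.
  intros Hab Hc Hb.
  set (g := fun tau => - h (a + b - tau)).
  assert (Hg : forall t, a <= t <= b -> continuous g t).
  { intros t Ht. unfold g.
    apply (continuous_opp (fun tau => h (a + b - tau))).
    apply (continuous_comp (fun tau => a + b - tau) h).
    - apply (continuous_minus (fun _ => a + b) (fun tau => tau)).
      + apply continuous_const.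
      + apply continuous_id.
    - apply Hc. lra. }
  destruct (last_below g a b (- y) Hab Hg) as [s0 [Hs0 [Hgs0 Hafter]]].
  { unfold g. replace (a + b - a) with b by ring. lra. }
  exists (a + b - s0). split; [lra|]. split.
  - unfold g in Hgs0. lra.
  - intros t Ht. specialize (Hafter (a + b - t)). unfold g in Hafter.
    replace (a + b - (a + b - t)) with t in Hafter by ring.
    assert (- y < - h t) by (apply Hafter; lra). lra.
Qed.

Lemma barrier h dh a b eta : a <= b -> 0 < eta -> continuous h a ->
  (forall t, a < t <= b -> is_derive h t (dh t)) -> h a <= 0 ->
  (forall t, a < t <= b -> 0 < h t < eta -> dh t <= 0) -> h b <= 0.
Proof.
  intros Hab Heta Hca Hd Ha Hsign.
  apply Rnot_lt_le. intros Hb.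
  assert (Hc : forall t, a <= t <= b -> continuous h t).
  { intros t Ht. destruct (Req_dec t a) as [->|Hne]; [exact Hca|].
    apply ex_derive_continuous. exists (dh t). apply Hd. lra. }
  destruct (last_below h a b 0 Hab Hc Ha) as [s [Hs [Hhs Hpos]]].
  set (c := Rmin (h b) (eta / 2)).
  assert (Hc0 : 0 < c) by (unfold c; apply Rmin_glb_lt; lra).
  assert (Hcb : c <= h b) by (unfold c; apply Rmin_l).
  assert (Hceta : c < eta) by (unfold c; pose proof (Rmin_r (h b) (eta/2)); lra).
  destruct (first_above h s b c (proj2 Hs) (fun t Ht => Hc t (conj (Rle_trans _ _ _ (proj1 Hs) (proj1 Ht)) (proj2 Ht))) Hcb)
    as [s2 [Hs2 [Hhs2 Hbefore]]].
  assert (Hss2 : s < s2).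
  { destruct (Req_dec s s2) as [<-|]; [lra|]. lra. }
  destruct (MVT_open h dh s s2 Hss2) as [xi [Hxi Heq]].
  - intros x Hx. apply Hd. lra.
  - intros x Hx. apply continuity_pt_filterlim. apply Hc. lra.
  - assert (dh xi <= 0).
    { apply Hsign; [lra|]. split.
      - apply Hpos. lra.
      - assert (h xi < c) by (apply Hbefore; lra). lra. }
    assert (dh xi * (s2 - s) <= 0).
    { apply Rmult_le_0_r; lra. }
    lra.
Qed.


Lemma sum_n_nonneg (a : nat -> R) N : (forall n, 0 <= a n) -> 0 <= sum_n a N.
Proof.
  intros H. induction N.
  - rewrite sum_O. apply H.
  - rewrite sum_Sn. change (plus (sum_n a N) (a (S N))) with (sum_n a N + a (S N)).
    pose proof (H (S N)). lra.
Qed.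

Lemma sum_n_ge_term (a : nat -> R) m N : (forall n, 0 <= a n) -> (m <= N)%nat -> a m <= sum_n a N.
Proof.
  intros H Hm. induction N.
  - assert (m = 0%nat) by lia. subst. rewrite sum_O. lra.
  - rewrite sum_Sn. change (plus (sum_n a N) (a (S N))) with (sum_n a N + a (S N)).
    destruct (Nat.eq_dec m (S N)) as [->|Hne].
    + pose proof (sum_n_nonneg a N H). lra.
    + assert (a m <= sum_n a N) by (apply IHN; lia). pose proof (H (S N)). lra.
Qed.

Lemma Series_nonneg_gen (a : nat -> R) : (forall n, 0 <= a n) -> 0 <= Series a.
Proof.
  intros H. unfold Series.
  assert (Hle : Rbar_le (Lim_seq (fun _ => 0)) (Lim_seq (sum_n a))).
  { apply Lim_seq_le_loc. exists 0%nat. intros n _. apply sum_n_nonneg. exact H. }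
  rewrite Lim_seq_const in Hle.
  destruct (Lim_seq (sum_n a)) as [x| |]; simpl in *; lra.
Qed.

Lemma Series_ge_term (a : nat -> R) m : (forall n, 0 <= a n) -> ex_series a -> a m <= Series a.
Proof.
  intros H [l Hl].
  rewrite (is_series_unique a l Hl).
  assert (Hle : Rbar_le (Lim_seq (fun _ => a m)) (Lim_seq (sum_n a))).
  { apply Lim_seq_le_loc. exists m. intros n Hn. apply sum_n_ge_term; auto. }
  rewrite Lim_seq_const in Hle.
  rewrite (is_lim_seq_unique (sum_n a) l Hl) in Hle. simpl in Hle. exact Hle.
Qed.

Lemma pow_le_one_dec x m n : 0 <= x <= 1 -> (m <= n)%nat -> x ^ n <= x ^ m.
Proof.
  intros Hx Hmn. replace n with (m + (n - m))%nat by lia. rewrite pow_add.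
  assert (0 <= x ^ m) by (apply pow_le; lra).
  assert (x ^ (n - m) <= 1).
  { generalize (n - m)%nat. intros k. induction k; simpl; [lra|].
    assert (0 <= x ^ k) by (apply pow_le; lra). nra. }
  nra.
Qed.

Section Dpot.
Variables (a b : nat -> R) (pstar : nat).
Hypothesis hc0 : forall p, (p < pstar)%nat -> ccoef a b p = 0.
Hypothesis hcnn : forall p, 0 <= ccoef a b p.
Hypothesis hp2 : (2 <= pstar)%nat.
Hypothesis hcpos : 0 < ccoef a b pstar.
Variable rho : R.
Hypothesis hrho : 0 < rho.
Hypothesis hsum : ex_series (fun p => ccoef a b p * INR p * rho ^ p).

Definition term (s : R) (p : nat) : R := INR p * ccoef a b p * s ^ (p - 1).

Lemma dpot_eq s : dpot a b s = Series (term s).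
Proof. reflexivity. Qed.

Lemma term_nonneg s p : 0 <= s -> 0 <= term s p.
Proof.
  intros Hs. unfold term. apply Rmult_le_pos; [apply Rmult_le_pos|].
  - apply pos_INR.
  - apply hcnn.
  - apply pow_le; exact Hs.
Qed.

Lemma dpot_nonneg s : 0 <= s -> 0 <= dpot a b s.
Proof. intros Hs. apply Series_nonneg_gen. intros; apply term_nonneg; exact Hs. Qed.

Lemma term_conv s : 0 <= s <= rho -> ex_series (term s).
Proof.
  intros Hs.
  apply (ex_series_le (term s) (fun p => (ccoef a b p * INR p * rho ^ p) * / rho)).
  - intros p. change (norm (term s p)) with (Rabs (term s p)).
    rewrite Rabs_pos_eq by (apply term_nonneg; lra).
    unfold term. destruct p as [|q].
    + simpl. assert (0 <= ccoef a b 0 * 0 * 1 * / rho).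
      { rewrite Rmult_0_r, Rmult_0_l, Rmult_0_l. lra. }
      lra.
    + replace (S q - 1)%nat with q by lia. simpl pow.
      assert (s ^ q <= rho ^ q) by (apply pow_incr; lra).
      assert (0 <= INR (S q) * ccoef a b (S q)) by (apply Rmult_le_pos; [apply pos_INR|apply hcnn]).
      replace (ccoef a b (S q) * INR (S q) * (rho * rho ^ q) * / rho)
        with (INR (S q) * ccoef a b (S q) * rho ^ q) by (field; lra).
      apply Rmult_le_compat_l; auto.
  - apply ex_series_scal_r. exact hsum.
Qed.

Lemma term_abs s p : Rabs (term s p) = term (Rabs s) p.
Proof.
  unfold term. rewrite Rabs_mult, Rabs_mult, <- RPow_abs.
  rewrite (Rabs_pos_eq (INR p)) by apply pos_INR.
  rewrite (Rabs_pos_eq (ccoef a b p)) by apply hcnn. reflexivity.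
Qed.

Definition rr : R := Rmin (1/2) rho.

Lemma rr_pos : 0 < rr.
Proof. unfold rr. apply Rmin_glb_lt; lra. Qed.
Lemma rr_le_half : rr <= 1/2.
Proof. apply Rmin_l. Qed.
Lemma rr_le_rho : rr <= rho.
Proof. apply Rmin_r. Qed.

Definition Kr : R := Series (term rr) / rr ^ (pstar - 1).

Lemma term_lower s : 0 <= s <= rho -> INR pstar * ccoef a b pstar * s ^ (pstar - 1) <= dpot a b s.
Proof.
  intros Hs. rewrite dpot_eq.
  apply (Series_ge_term (term s) pstar).
  - intros; apply term_nonneg; lra.
  - apply term_conv; exact Hs.
Qed.

Lemma Kr_pos : 0 < Kr.
Proof.
  unfold Kr. pose proof rr_pos. pose proof rr_le_rho.
  assert (0 < rr ^ (pstar - 1)) by (apply pow_lt; lra).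
  assert (0 < INR pstar * ccoef a b pstar * rr ^ (pstar - 1)).
  { apply Rmult_lt_0_compat; [apply Rmult_lt_0_compat|]; auto.
    apply lt_0_INR; lia. }
  pose proof (term_lower rr (conj (Rlt_le _ _ H) H0)).
  rewrite dpot_eq in H3.
  apply Rdiv_lt_0_compat; lra.
Qed.

Lemma dpot_upper s : 0 <= s <= rr -> dpot a b s <= Kr * s ^ (pstar - 1).
Proof.
  intros Hs. pose proof rr_pos. pose proof rr_le_rho.
  rewrite dpot_eq.
  assert (Hx : 0 <= s / rr <= 1).
  { split; [apply Rdiv_le_0_compat; lra|].
    replace 1 with (rr / rr) by (field; lra). unfold Rdiv. apply Rmult_le_compat_r; [|lra].
    left; apply Rinv_0_lt_compat; lra. }
  apply Rle_trans with (Series (fun p => term rr p * (s / rr) ^ (pstar - 1))).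
  - apply Series_le.
    + intros p. split; [apply term_nonneg; lra|].
      unfold term. destruct (le_lt_dec pstar p) as [Hp|Hp].
      * replace s with (rr * (s / rr)) at 1 by (field; lra).
        rewrite Rpow_mult_distr.
        assert ((s / rr) ^ (p - 1) <= (s / rr) ^ (pstar - 1)) by (apply pow_le_one_dec; [lra|lia]).
        assert (0 <= INR p * ccoef a b p * rr ^ (p - 1)).
        { apply Rmult_le_pos; [apply Rmult_le_pos; [apply pos_INR|apply hcnn]|apply pow_le; lra]. }
        rewrite <- Rmult_assoc. apply Rmult_le_compat_l; auto.
      * rewrite (hc0 p Hp). rewrite Rmult_0_r, !Rmult_0_l. lra.
    + apply ex_series_scal_r. apply term_conv. lra.
  - rewrite Series_scal_r. unfold Kr.
    replace (s / rr) with (s * / rr) by reflexivity.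
    rewrite Rpow_mult_distr, pow_inv.
    assert (0 < rr ^ (pstar - 1)) by (apply pow_lt; lra).
    right. field. lra.
Qed.

Lemma dpot_abs s : Rabs s <= rr -> Rabs (dpot a b s) <= Kr * Rabs s ^ (pstar - 1).
Proof.
  intros Hs. pose proof rr_le_rho.
  rewrite dpot_eq.
  eapply Rle_trans.
  - apply Series_Rabs. apply (ex_series_ext (term (Rabs s))).
    + intros p. rewrite term_abs. reflexivity.
    + apply term_conv. split; [apply Rabs_pos|lra].
  - rewrite (Series_ext _ (term (Rabs s))) by (intros; apply term_abs).
    rewrite <- dpot_eq. apply dpot_upper. split; [apply Rabs_pos|lra].
Qed.

Lemma dpot_abs_lin s : Rabs s <= rr -> Rabs (dpot a b s) <= Kr * Rabs s.
Proof.
  intros Hs. eapply Rle_trans; [apply dpot_abs; exact Hs|].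
  pose proof Kr_pos. pose proof rr_le_half.
  apply Rmult_le_compat_l; [lra|].
  replace (Rabs s) with (Rabs s ^ 1) at 2 by ring.
  apply pow_le_one_dec; [split; [apply Rabs_pos|lra]|lia].
Qed.

End Dpot.


Lemma is_derive_mult_R (f g : R -> R) (x df dg : R) : is_derive f x df -> is_derive g x dg ->
  is_derive (fun t => f t * g t) x (df * g x + f x * dg).
Proof. intros H1 H2. exact (is_derive_mult f g x df dg H1 H2 Rmult_comm). Qed.
Lemma is_derive_plus_R (f g : R -> R) (x df dg : R) : is_derive f x df -> is_derive g x dg ->
  is_derive (fun t => f t + g t) x (df + dg).
Proof. intros H1 H2. exact (is_derive_plus f g x df dg H1 H2). Qed.
Lemma is_derive_minus_R (f g : R -> R) (x df dg : R) : is_derive f x df -> is_derive g x dg ->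
  is_derive (fun t => f t - g t) x (df - dg).
Proof. intros H1 H2. exact (is_derive_minus f g x df dg H1 H2). Qed.
Lemma is_derive_const_R (c x : R) : is_derive (fun _ => c) x 0.
Proof. exact (is_derive_const (K:=R_AbsRing) (V:=R_NormedModule) c x). Qed.
Lemma is_derive_id_R (x : R) : is_derive (fun t => t) x 1.
Proof. exact (is_derive_id (K:=R_AbsRing) x). Qed.
Lemma is_derive_eq (f : R -> R) (x l l' : R) : is_derive f x l -> l = l' -> is_derive f x l'.
Proof. intros H ->; exact H. Qed.
Lemma is_derive_comp_R (f g : R -> R) (x df dg : R) : is_derive f (g x) df -> is_derive g x dg ->
  is_derive (fun t => f (g t)) x (df * dg).
Proof. intros H1 H2. apply (is_derive_eq _ _ (scal dg df)).
  - exact (is_derive_comp f g x df dg H1 H2).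
  - change (dg * df = df * dg). ring. Qed.
Lemma continuous_mult_R (f g : R -> R) x : continuous f x -> continuous g x ->
  continuous (fun t => f t * g t) x.
Proof. intros; apply (continuous_mult f g x); auto. Qed.
Lemma continuous_plus_R (f g : R -> R) x : continuous f x -> continuous g x ->
  continuous (fun t => f t + g t) x.
Proof. intros; apply (continuous_plus f g x); auto. Qed.
Lemma continuous_const_R (c x : R) : continuous (fun _ => c) x.
Proof. exact (continuous_const (U:=R_UniformSpace) (V:=R_NormedModule) c x). Qed.
Lemma continuous_comp_R (f g : R -> R) x : continuous g x -> continuous f (g x) ->
  continuous (fun t => f (g t)) x.
Proof. intros; apply (continuous_comp g f x); auto. Qed.

Definition mneg (x : R) : R := (Rmin x 0) ^ 2.

Lemma mneg_derive x : is_derive mneg x (2 * Rmin x 0).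
Proof.
  destruct (Rtotal_order x 0) as [Hx|[Hx|Hx]].
  - apply (is_derive_ext_loc (fun y => y ^ 2)).
    + assert (Hd : 0 < - x) by lra. exists (mkposreal _ Hd). intros y Hy.
      unfold ball in Hy; simpl in Hy; unfold AbsRing_ball, abs, minus, plus, opp in Hy; simpl in Hy.
      apply Rabs_lt_between in Hy. unfold mneg. rewrite Rmin_left by lra. reflexivity.
    + rewrite Rmin_left by lra. apply (is_derive_eq _ _ (INR 2 * 1 * x ^ Nat.pred 2)).
      * apply is_derive_pow. apply is_derive_id_R.
      * simpl. ring.
  - subst. apply is_derive_Reals. intros eps Heps. exists (mkposreal _ Heps).
    intros h Hh Hlt. simpl in Hlt. unfold mneg. rewrite Rplus_0_l, (Rmin_right 0 0) by lra.
    replace ((Rmin h 0 ^ 2 - 0 ^ 2) / h - 2 * 0) with (Rmin h 0 ^ 2 / h) by (field; auto).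
    destruct (Rle_dec h 0).
    + rewrite Rmin_left by lra. replace (h ^ 2 / h) with h by (field; auto). exact Hlt.
    + rewrite Rmin_right by lra. replace (0 ^ 2 / h) with 0 by (field; auto).
      rewrite Rabs_R0; exact Heps.
  - apply (is_derive_ext_loc (fun _ => 0)).
    + exists (mkposreal _ Hx). intros y Hy.
      unfold ball in Hy; simpl in Hy; unfold AbsRing_ball, abs, minus, plus, opp in Hy; simpl in Hy.
      apply Rabs_lt_between in Hy. unfold mneg. rewrite Rmin_right by lra. rewrite pow_i by lia. reflexivity.
    + rewrite Rmin_right by lra. apply (is_derive_eq _ _ 0); [apply is_derive_const_R| simpl; change (0 = 2 * 0); ring].
Qed.

Lemma mneg_cont x : continuous mneg x.
Proof. apply (ex_derive_continuous (K:=R_AbsRing) (V:=R_NormedModule) mneg x).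
  exists (2 * Rmin x 0). apply mneg_derive. Qed.

Lemma fsum_const n c : fsum n (fun _ => c) = INR n * c.
Proof. induction n; simpl fsum; [simpl; ring|]. rewrite IHn, S_INR. ring. Qed.

Lemma fsum_half n f g : fsum n (fun i => (f i + g i) / 2) = (fsum n f + fsum n g) / 2.
Proof. induction n; simpl; [field| rewrite IHn; field]. Qed.

Lemma dot_half n x y : dot n x y <= (dot n x x + dot n y y) / 2 /\
                       - dot n x y <= (dot n x x + dot n y y) / 2.
Proof.
  unfold dot. rewrite <- fsum_half. split.
  - apply fsum_le. intros i _. pose proof (pow2_ge_0 (x i - y i)). nra.
  - replace (- fsum n (fun i => x i * y i)) with (fsum n (fun i => - (x i * y i))).
    + apply fsum_le. intros i _. pose proof (pow2_ge_0 (x i + y i)). nra.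
    + replace (- fsum n (fun i => x i * y i)) with (-1 * fsum n (fun i => x i * y i)) by ring.
      rewrite <- fsum_scal. apply fsum_ext. intros; ring.
Qed.

Lemma dot_comm n x y : dot n x y = dot n y x.
Proof. unfold dot. apply fsum_ext. intros; ring. Qed.

Lemma fsum_mix d k (x : nat -> R) (c : nat -> R) (y : nat -> nat -> R) :
  fsum d (fun i => x i * fsum k (fun l => c l * y l i)) =
  fsum k (fun l => c l * fsum d (fun i => x i * y l i)).
Proof.
  transitivity (fsum d (fun i => fsum k (fun l => c l * (x i * y l i)))).
  - apply fsum_ext. intros i _. rewrite <- fsum_scal. apply fsum_ext. intros; ring.
  - rewrite fsum_swap. apply fsum_ext. intros l _. rewrite <- fsum_scal. reflexivity.
Qed.


Lemma flow_alg_gen d k (V : nat -> nat -> R) (x : nat -> R) j (gg : nat -> R) :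
  fsum d (fun i => V j i * - (- fsum k (fun l => gg l * V l i) -
      x i * dot d x (fun i0 => - fsum k (fun l => gg l * V l i0)))) =
  fsum k (fun l => gg l *
     (dot d (V j) (V l) - dot d (V j) x * dot d (V l) x)).
Proof.
  assert (HD : dot d x (fun i => - fsum k (fun l => gg l * V l i)) =
               - fsum k (fun l => gg l * dot d (V l) x)).
  { unfold dot.
    transitivity (-1 * fsum d (fun i => x i * fsum k (fun l => gg l * V l i))).
    - rewrite <- fsum_scal. apply fsum_ext. intros; ring.
    - rewrite fsum_mix. replace (- fsum k (fun l => gg l * fsum d (fun i => V l i * x i)))
        with (-1 * fsum k (fun l => gg l * fsum d (fun i => V l i * x i))) by ring.
      f_equal. apply fsum_ext. intros l _. f_equal. apply fsum_ext. intros; ring. }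
  set (D := dot d x (fun i => - fsum k (fun l => gg l * V l i))) in *.
  transitivity (fsum d (fun i => V j i * fsum k (fun l => gg l * V l i)) + D * dot d (V j) x).
  - replace (dot d (V j) x) with (fsum d (fun i => V j i * x i)) by reflexivity.
    rewrite <- fsum_scal, <- fsum_plus. apply fsum_ext. intros; ring.
  - rewrite fsum_mix. rewrite HD.
    transitivity (fsum k (fun l => gg l * dot d (V j) (V l)) -
                  dot d (V j) x * fsum k (fun l => gg l * dot d (V l) x)).
    + change (fsum k (fun l => gg l * fsum d (fun i => V j i * V l i))) with
        (fsum k (fun l => gg l * dot d (V j) (V l))). ring.
    + rewrite <- fsum_scal, <- fsum_minus. apply fsum_ext. intros; ring.
Qed.

Lemma flow_algebra a b d k (V : nat -> nat -> R) (x : nat -> R) j :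
  fsum d (fun i => V j i * flow_field a b d k V x i) =
  fsum k (fun l => dpot a b (dot d (V l) x) *
     (dot d (V j) (V l) - dot d (V j) x * dot d (V l) x)).
Proof.
  exact (flow_alg_gen d k V x j (fun l => dpot a b (dot d (V l) x))).
Qed.


Lemma is_derive_ipow (f : R -> R) (t df : R) (n : nat) : (1 <= n)%nat -> f t <> 0 ->
  is_derive f t df -> is_derive (fun s => (/ f s) ^ n) t (- INR n * df * (/ f t) ^ (S n)).
Proof.
  intros Hn Hf Hd.
  apply (is_derive_eq _ _ (INR n * (- df / f t ^ 2) * (/ f t) ^ Nat.pred n)).
  - apply (is_derive_pow (fun s => / f s)). apply is_derive_inv; auto.
  - destruct n as [|m]; [lia|]. simpl Nat.pred. rewrite !pow_inv.
    assert (f t ^ m <> 0) by (apply pow_nonzero; auto).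
    simpl. field. auto.
Qed.

Lemma continuous_ipow (f : R -> R) (t : R) (n : nat) : continuous f t -> f t <> 0 ->
  continuous (fun s => (/ f s) ^ n) t.
Proof.
  intros Hc Hf. apply (continuous_comp_R (fun x => (/ x) ^ n) f); auto.
  apply (ex_derive_continuous (K:=R_AbsRing) (V:=R_NormedModule)). auto_derive. auto.
Qed.

Lemma continuous_ln_comp (f : R -> R) (t : R) : continuous f t -> 0 < f t ->
  continuous (fun s => ln (f s)) t.
Proof.
  intros Hc Hf. apply (continuous_comp_R ln f); auto.
  apply (ex_derive_continuous (K:=R_AbsRing) (V:=R_NormedModule)). eexists. apply is_derive_ln. auto.
Qed.

Lemma pow_inv_mul (x : R) (n : nat) : x <> 0 -> x ^ n * (/ x) ^ n = 1.
Proof. intros Hx. rewrite <- Rpow_mult_distr, Rinv_r by auto. apply pow1. Qed.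

Lemma inv_pow_lt_imp (x y : R) (n : nat) : 0 < x -> 0 < y -> (/ y) ^ n < (/ x) ^ n -> x < y.
Proof.
  intros Hx Hy H. apply Rnot_le_lt. intros Hle.
  assert ((/ x) ^ n <= (/ y) ^ n); [|lra].
  apply pow_incr. split; [left; apply Rinv_0_lt_compat; lra|]. apply Rinv_le_contravar; lra.
Qed.

Section Instance.
Variables (a b : nat -> R) (pstar k : nat) (A : nat -> nat -> R) (c1 c2 : R) (d : nat)
  (V : nat -> nat -> R) (w : R -> nat -> R).
Hypothesis Hadm : admissible a b k A c1 c2 d V w.
Hypothesis Hk : (1 <= k)%nat.

Definition W t := fun i => w (Rmax 0 t) i.
Definition u j t := dot d (V j) (W t).
Definition G j l := dot d (V j) (V l).
Definition g l t := dpot a b (u l t).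
Definition du j t := fsum k (fun l => g l t * (G j l - u j t * u l t)).

Lemma W_pos t : 0 < t -> W t = w t.
Proof. intros Ht. unfold W. rewrite Rmax_right by lra. reflexivity. Qed.
Lemma W_nonneg t : 0 <= t -> W t = w t.
Proof. intros Ht. unfold W. rewrite Rmax_right by lra. reflexivity. Qed.

Lemma W_cont i t : (i < d)%nat -> continuous (fun s => W s i) t.
Proof.
  intros Hi. destruct Hadm as [_ [_ [_ [_ [[Hc0 [Hder _]] _]]]]].
  destruct (Rtotal_order t 0) as [Ht|[Ht|Ht]].
  - apply (continuous_ext_loc _ (fun _ => w 0 i)).
    + assert (Hd : 0 < - t) by lra. exists (mkposreal _ Hd). intros y Hy.
      unfold ball in Hy; simpl in Hy; unfold AbsRing_ball, abs, minus, plus, opp in Hy; simpl in Hy.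
      apply Rabs_lt_between in Hy. unfold W. rewrite Rmax_left by lra. reflexivity.
    + apply continuous_const_R.
  - subst. apply filterlim_locally. intros eps.
    specialize (Hc0 i Hi). apply filterlim_locally with (eps := eps) in Hc0.
    destruct Hc0 as [del Hdel]. exists del. intros y Hy.
    unfold W. rewrite (Rmax_left 0 0) by lra.
    destruct (Rle_dec y 0).
    + rewrite Rmax_left by lra. apply ball_center.
    + rewrite Rmax_right by lra. apply Hdel; [exact Hy| lra].
  - apply (continuous_ext_loc _ (fun s => w s i)).
    + exists (mkposreal _ Ht). intros y Hy.
      unfold ball in Hy; simpl in Hy; unfold AbsRing_ball, abs, minus, plus, opp in Hy; simpl in Hy.
      apply Rabs_lt_between in Hy. unfold W. rewrite Rmax_right by lra. reflexivity.
    + apply (ex_derive_continuous (K:=R_AbsRing) (V:=R_NormedModule)).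
      eexists. apply Hder; auto.
Qed.

Lemma W_deriv i t : (i < d)%nat -> 0 < t ->
  is_derive (fun s => W s i) t (flow_field a b d k V (w t) i).
Proof.
  intros Hi Ht. destruct Hadm as [_ [_ [_ [_ [[Hc0 [Hder _]] _]]]]].
  apply (is_derive_ext_loc (fun s => w s i)).
  - exists (mkposreal _ Ht). intros y Hy.
    unfold ball in Hy; simpl in Hy; unfold AbsRing_ball, abs, minus, plus, opp in Hy; simpl in Hy.
    apply Rabs_lt_between in Hy. unfold W. rewrite Rmax_right by lra. reflexivity.
  - apply Hder; auto.
Qed.

Lemma u_cont j t : continuous (u j) t.
Proof.
  unfold u, dot. apply continuous_fsum. intros i Hi.
  apply continuous_mult_R; [apply continuous_const_R| apply W_cont; exact Hi].
Qed.

Lemma u_deriv j t : 0 < t -> is_derive (u j) t (du j t).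
Proof.
  intros Ht. unfold u at 1, dot.
  apply (is_derive_eq _ _ (fsum d (fun i => V j i * flow_field a b d k V (w t) i))).
  - apply is_derive_fsum. intros i Hi. apply is_derive_scal. apply W_deriv; auto.
  - rewrite flow_algebra. unfold du, g, u, G. rewrite W_pos by exact Ht. reflexivity.
Qed.

Lemma W_unit t : dot d (W t) (W t) = 1.
Proof.
  destruct Hadm as [_ [_ [_ [_ [[_ [_ Hu]] _]]]]].
  unfold W. apply (Hu (Rmax 0 t)). apply Rmax_l.
Qed.

Lemma u_bound j t : (j < k)%nat -> -1 <= u j t <= 1.
Proof.
  intros Hj. destruct Hadm as [HV _].
  pose proof (dot_half d (V j) (W t)) as [H1 H2]. rewrite HV in H1, H2 by exact Hj.
  rewrite W_unit in H1, H2. unfold u. lra.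
Qed.

Lemma G_diag j : (j < k)%nat -> G j j = 1.
Proof. intros Hj. destruct Hadm as [HV _]. apply HV; exact Hj. Qed.
Lemma G_nonneg j l : (j < k)%nat -> (l < k)%nat -> 0 <= G j l.
Proof. intros Hj Hl. destruct Hadm as [_ [_ [_ [HG _]]]]. apply HG; auto. Qed.
Lemma G_le1 j l : (j < k)%nat -> (l < k)%nat -> G j l <= 1.
Proof.
  intros Hj Hl. destruct Hadm as [HV _].
  pose proof (dot_half d (V j) (V l)) as [H1 H2]. rewrite !HV in H1 by auto. unfold G. lra.
Qed.

Lemma u_init j : (j < k)%nat -> 0 < u j 0 /\ c1 / sqrt (INR d) <= u j 0 <= c2 / sqrt (INR d).
Proof.
  intros Hj. destruct Hadm as [_ [_ [_ [_ [_ Hi]]]]].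
  unfold u. rewrite W_nonneg by lra. apply Hi; exact Hj.
Qed.

Lemma unorm_eq t : 0 <= t -> unorm d k V w t = sqrt (fsum k (fun j => u j t * u j t)).
Proof.
  intros Ht. unfold unorm, norm2, dot, u_of, u. rewrite W_nonneg by exact Ht. reflexivity.
Qed.


Hypothesis hc0 : forall p, (p < pstar)%nat -> ccoef a b p = 0.
Hypothesis hcnn : forall p, 0 <= ccoef a b p.
Hypothesis hp2 : (2 <= pstar)%nat.
Hypothesis hcpos : 0 < ccoef a b pstar.
Variable rho : R.
Hypothesis hrho : 0 < rho.
Hypothesis hsum : ex_series (fun p => ccoef a b p * INR p * rho ^ p).

Let r0 := rr rho.
Let K0 := Kr a b pstar rho.
Lemma r0_pos : 0 < r0. Proof. apply rr_pos; auto. Qed.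
Lemma r0_half : r0 <= 1/2. Proof. apply rr_le_half. Qed.
Lemma r0_rho : r0 <= rho. Proof. apply rr_le_rho. Qed.
Lemma K0_pos : 0 < K0. Proof. eapply Kr_pos; eauto. Qed.
Lemma dnn s : 0 <= s -> 0 <= dpot a b s. Proof. intros; eapply dpot_nonneg; eauto. Qed.
Lemma dlin s : Rabs s <= r0 -> Rabs (dpot a b s) <= K0 * Rabs s.
Proof. intros; eapply dpot_abs_lin; eauto. Qed.
Lemma dup s : 0 <= s <= r0 -> dpot a b s <= K0 * s ^ (pstar - 1).
Proof. intros; eapply dpot_upper; eauto. Qed.
Lemma dlow s : 0 <= s <= r0 -> INR pstar * ccoef a b pstar * s ^ (pstar - 1) <= dpot a b s.
Proof. intros. eapply term_lower; eauto. pose proof r0_rho. lra. Qed.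

Definition Q t := fsum k (fun j => mneg (u j t)).
Definition dQ t := fsum k (fun j => 2 * Rmin (u j t) 0 * du j t).

Lemma Q_deriv t : 0 < t -> is_derive Q t (dQ t).
Proof.
  intros Ht. unfold Q, dQ. apply is_derive_fsum. intros j Hj.
  apply (is_derive_comp_R mneg (u j)); [apply mneg_derive| apply u_deriv; exact Ht].
Qed.

Lemma Q_cont t : continuous Q t.
Proof.
  unfold Q. apply continuous_fsum. intros j Hj.
  apply continuous_comp_R; [apply u_cont| apply mneg_cont].
Qed.

Lemma pos_term ui ul Gil gl : -1 <= ui <= 1 -> -1 <= ul <= 1 -> 0 <= Gil <= 1 ->
  (0 <= ul -> 0 <= gl) -> (ul < 0 -> Rabs gl <= K0 * Rabs ul) ->
  2 * Rmin ui 0 * (gl * (Gil - ui * ul)) <= 2 * K0 * (mneg ui + mneg ul).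
Proof.
  intros Hui Hul HG Hg1 Hg2. pose proof K0_pos.
  assert (0 <= mneg ui) by (unfold mneg; apply pow2_ge_0).
  assert (0 <= mneg ul) by (unfold mneg; apply pow2_ge_0).
  destruct (Rle_dec 0 ui).
  - rewrite Rmin_right by lra. nra.
  - rewrite Rmin_left by lra. destruct (Rle_dec 0 ul).
    + specialize (Hg1 r). assert (0 <= Gil - ui * ul) by nra.
      assert (0 <= gl * (Gil - ui * ul)) by nra. nra.
    + specialize (Hg2 ltac:(lra)). unfold mneg. rewrite !Rmin_left by lra.
      rewrite (Rabs_left ul) in Hg2 by lra.
      assert (Habs : Rabs (Gil - ui * ul) <= 2).
      { apply Rabs_le. nra. }
      assert (Hprod : Rabs (2 * ui * (gl * (Gil - ui * ul))) <= 2 * (- ui) * ((K0 * - ul) * 2)).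
      { rewrite !Rabs_mult. rewrite (Rabs_pos_eq 2) by lra. rewrite (Rabs_left ui) by lra.
        apply Rmult_le_compat; try apply Rmult_le_pos; try apply Rabs_pos; try lra.
        apply Rmult_le_compat; try apply Rabs_pos; lra. }
      apply Rabs_le_between in Hprod. destruct Hprod as [_ Hprod].
      assert (2 * (- ui) * ((K0 * - ul) * 2) <= 2 * K0 * (ui ^ 2 + ul ^ 2)).
      { pose proof (pow2_ge_0 (ui - ul)). nra. }
      lra.
Qed.

Definition KQ := 4 * INR k * K0.

Lemma dQ_bound t : 0 < t -> (forall j, (j < k)%nat -> - r0 < u j t) -> dQ t <= KQ * Q t.
Proof.
  intros Ht Hneg. unfold dQ, du.
  apply Rle_trans with (fsum k (fun i => fsum k (fun l => 2 * K0 * (mneg (u i t) + mneg (u l t))))).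
  - apply fsum_le. intros i Hi. rewrite <- fsum_scal. apply fsum_le. intros l Hl.
    apply pos_term.
    + apply u_bound; auto.
    + apply u_bound; auto.
    + split; [apply G_nonneg| apply G_le1]; auto.
    + intros; apply dnn; auto.
    + intros Hlt. apply dlin. specialize (Hneg l Hl). rewrite Rabs_left by lra. lra.
  - right. unfold KQ, Q.
    transitivity (fsum k (fun i => 2 * K0 * (INR k * mneg (u i t) + fsum k (fun l => mneg (u l t))))).
    + apply fsum_ext. intros i _. rewrite <- fsum_const.
      rewrite <- fsum_plus, <- fsum_scal. reflexivity.
    + rewrite fsum_scal, fsum_plus, fsum_scal, fsum_const. ring.
Qed.

Lemma Q_nonneg t : 0 <= Q t.
Proof. unfold Q. apply fsum_nonneg. intros; unfold mneg; apply pow2_ge_0. Qed.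

Lemma Q_zero : Q 0 = 0.
Proof.
  unfold Q. transitivity (fsum k (fun _ => 0)); [|apply fsum_zero]. apply fsum_ext. intros j Hj.
  destruct (u_init j Hj) as [Hp _]. unfold mneg. rewrite Rmin_right by lra. ring.
Qed.

Lemma positivity T : 0 <= T -> forall j, (j < k)%nat -> 0 <= u j T.
Proof.
  intros HT j Hj.
  assert (HQ : Q T <= 0).
  { destruct (Req_dec T 0) as [->|HT0]; [rewrite Q_zero; lra|].
    pose proof r0_pos. pose proof K0_pos.
    assert (HKQ : 0 <= KQ) by (unfold KQ; pose proof (pos_INR k); apply Rmult_le_pos; [|lra]; lra).
    set (h := fun t => exp (- KQ * t) * Q t).
    set (dh := fun t => (exp (- KQ * t) * (- KQ)) * Q t + exp (- KQ * t) * dQ t).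
    assert (Hbar : h T <= 0).
    { apply (barrier h dh 0 T (r0 ^ 2 * exp (- KQ * T))).
      - lra.
      - apply Rmult_lt_0_compat; [apply pow_lt; lra| apply exp_pos].
      - unfold h. apply continuous_mult_R; [|apply Q_cont].
        apply continuous_comp_R.
        + apply (ex_derive_continuous (K:=R_AbsRing) (V:=R_NormedModule)). auto_derive. auto.
        + apply (ex_derive_continuous (K:=R_AbsRing) (V:=R_NormedModule)). auto_derive. auto.
      - intros t Ht. unfold h, dh. apply (is_derive_mult_R (fun t => exp (- KQ * t)) Q); [|apply Q_deriv; lra].
        apply (is_derive_comp_R exp (fun t => - KQ * t)).
        + apply is_derive_exp.
        + apply (is_derive_eq _ _ (- KQ * 1)); [apply is_derive_scal, is_derive_id_R| ring].
      - unfold h. rewrite Q_zero. lra.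
      - intros t Ht [Hh1 Hh2]. unfold dh.
        assert (HQt : Q t < r0 ^ 2).
        { unfold h in Hh2. 
          assert (HQe : Q t = exp (- KQ * t) * Q t * exp (KQ * t)).
          { rewrite Rmult_assoc, (Rmult_comm (Q t)), <- Rmult_assoc, <- exp_plus.
            replace (- KQ * t + KQ * t) with 0 by ring. rewrite exp_0. ring. }
          rewrite HQe.
          apply Rlt_le_trans with (r0 ^ 2 * exp (- KQ * T) * exp (KQ * t)).
          - apply Rmult_lt_compat_r; [apply exp_pos| exact Hh2].
          - rewrite Rmult_assoc, <- exp_plus.
            assert (exp (- KQ * T + KQ * t) <= 1).
            { rewrite <- exp_0. destruct (Req_dec (- KQ * T + KQ * t) 0) as [->|]; [lra|].
              left. apply exp_increasing. nra. }
            assert (0 <= r0 ^ 2) by apply pow2_ge_0. nra. }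
        assert (Hneg : forall j, (j < k)%nat -> - r0 < u j t).
        { intros j0 Hj0. destruct (Rle_dec 0 (u j0 t)); [lra|].
          assert (Hm : mneg (u j0 t) <= Q t).
          { apply (fsum_ge_term k (fun j => mneg (u j t))); auto.
            intros; unfold mneg; apply pow2_ge_0. }
          unfold mneg in Hm. rewrite Rmin_left in Hm by lra.
          assert (u j0 t ^ 2 < r0 ^ 2) by lra. nra. }
        pose proof (dQ_bound t (proj1 Ht) Hneg) as HdQ. pose proof (exp_pos (- KQ * t)) as Hexp.
        unfold dh.
        replace (exp (- KQ * t) * - KQ * Q t + exp (- KQ * t) * dQ t) with
          (exp (- KQ * t) * (dQ t - KQ * Q t)) by ring.
        assert (dQ t - KQ * Q t <= 0) by lra. nra. }
    unfold h in Hbar. pose proof (exp_pos (- KQ * T)). pose proof (Q_nonneg T). nra. }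
  assert (Hm : mneg (u j T) <= Q T).
  { apply (fsum_ge_term k (fun j => mneg (u j T))); auto. intros; unfold mneg; apply pow2_ge_0. }
  destruct (Rle_dec 0 (u j T)) as [Hle|Hnle]; [auto|].
  unfold mneg in Hm. rewrite Rmin_left in Hm by lra.
  assert (0 < u j T ^ 2) by nra.
  lra.
Qed.


Definition Ps t := fsum k (fun j => u j t).
Definition dPs t := fsum k (fun j => du j t).

Lemma Ps_deriv t : 0 < t -> is_derive Ps t (dPs t).
Proof. intros Ht. unfold Ps, dPs. apply is_derive_fsum. intros j Hj. apply u_deriv; exact Ht. Qed.

Lemma Ps_cont t : continuous Ps t.
Proof. unfold Ps. apply continuous_fsum. intros j Hj. apply u_cont. Qed.

Lemma Ps_nonneg t : 0 <= t -> 0 <= Ps t.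
Proof. intros Ht. unfold Ps. apply fsum_nonneg. intros j Hj. apply positivity; auto. Qed.

Lemma u_le_Ps t j : 0 <= t -> (j < k)%nat -> u j t <= Ps t.
Proof.
  intros Ht Hj. unfold Ps. apply (fsum_ge_term k (fun j => u j t)); auto.
  intros; apply positivity; auto.
Qed.

Lemma dPs_alg t : dPs t = fsum k (fun l => g l t * fsum k (fun j => G j l)) -
                          Ps t * fsum k (fun l => g l t * u l t).
Proof.
  unfold dPs, du, Ps.
  transitivity (fsum k (fun j => fsum k (fun l => g l t * G j l) -
                                  u j t * fsum k (fun l => g l t * u l t))).
  - apply fsum_ext. intros j _. rewrite <- fsum_scal, <- fsum_minus.
    apply fsum_ext. intros; ring.
  - rewrite fsum_minus. f_equal.
    + rewrite fsum_swap. apply fsum_ext. intros l _. rewrite <- fsum_scal. reflexivity.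
    + rewrite Rmult_comm, <- fsum_scal. apply fsum_ext. intros; ring.
Qed.

Definition kappa := INR pstar * ccoef a b pstar.

Lemma kappa_pos : 0 < kappa.
Proof. unfold kappa. apply Rmult_lt_0_compat; auto. apply lt_0_INR. lia. Qed.

Lemma INRk_pos : 0 < INR k.
Proof. apply lt_0_INR. lia. Qed.

Lemma dPs_lower t : 0 < t -> Ps t <= r0 ->
  1/2 * kappa * (Ps t * / INR k) ^ (pstar - 1) <= dPs t.
Proof.
  intros Ht HP. pose proof r0_half. pose proof (Ps_nonneg t (Rlt_le _ _ Ht)) as HP0.
  pose proof INRk_pos as Hk0.
  assert (Hg : forall l, (l < k)%nat -> 0 <= g l t).
  { intros l Hl. apply dnn. apply positivity; auto; lra. }
  set (Sg := fsum k (fun l => g l t)).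
  assert (HSg : 0 <= Sg) by (apply fsum_nonneg; exact Hg).
  assert (H1 : Sg <= fsum k (fun l => g l t * fsum k (fun j => G j l))).
  { apply fsum_le. intros l Hl.
    assert (1 <= fsum k (fun j => G j l)).
    { rewrite <- (G_diag l Hl). apply (fsum_ge_term k (fun j => G j l)); auto.
      intros; apply G_nonneg; auto. }
    specialize (Hg l Hl). nra. }
  assert (H2 : fsum k (fun l => g l t * u l t) <= Ps t * Sg).
  { unfold Sg. rewrite <- fsum_scal. apply fsum_le. intros l Hl.
    pose proof (u_le_Ps t l (Rlt_le _ _ Ht) Hl). specialize (Hg l Hl). nra. }
  assert (H3 : 1/2 * Sg <= dPs t).
  { rewrite dPs_alg.
    assert (Ps t * fsum k (fun l => g l t * u l t) <= Ps t * (Ps t * Sg)) by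
      (apply Rmult_le_compat_l; auto).
    assert (Ps t * Ps t <= 1/4) by nra. nra. }
  destruct (fsum_exists_ge k (fun j => u j t) (Ps t * / INR k)) as [j [Hj Hju]].
  { lia. }
  { unfold Ps. right. field. lra. }
  assert (Hju2 : 0 <= Ps t * / INR k).
  { apply Rmult_le_pos; auto. left; apply Rinv_0_lt_compat; auto. }
  assert (H4 : kappa * (Ps t * / INR k) ^ (pstar - 1) <= g j t).
  { unfold g, kappa. eapply Rle_trans; [|apply dlow].
    - apply Rmult_le_compat_l.
      + apply Rmult_le_pos; [apply pos_INR| auto].
      + apply pow_incr. split; auto.
    - split; [apply positivity; auto; lra|]. pose proof (u_le_Ps t j (Rlt_le _ _ Ht) Hj). lra. }
  assert (H5 : g j t <= Sg) by (apply (fsum_ge_term k (fun l => g l t)); auto).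
  lra.
Qed.

Lemma dPs_upper t : 0 < t -> Ps t <= r0 ->
  dPs t <= INR k * INR k * K0 * Ps t ^ (pstar - 1).
Proof.
  intros Ht HP. pose proof (Ps_nonneg t (Rlt_le _ _ Ht)) as HP0. pose proof K0_pos.
  assert (Hg : forall l, (l < k)%nat -> 0 <= g l t).
  { intros l Hl. apply dnn. apply positivity; auto; lra. }
  rewrite dPs_alg.
  assert (Hs : 0 <= Ps t * fsum k (fun l => g l t * u l t)).
  { apply Rmult_le_pos; auto. apply fsum_nonneg. intros l Hl.
    apply Rmult_le_pos; auto. apply positivity; auto; lra. }
  assert (fsum k (fun l => g l t * fsum k (fun j => G j l)) <= INR k * (INR k * K0 * Ps t ^ (pstar - 1))).
  { apply fsum_const_le. intros l Hl.
    assert (HGs : fsum k (fun j => G j l) <= INR k * 1).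
    { apply fsum_const_le. intros; apply G_le1; auto. }
    assert (0 <= fsum k (fun j => G j l)) by (apply fsum_nonneg; intros; apply G_nonneg; auto).
    assert (Hgl : g l t <= K0 * Ps t ^ (pstar - 1)).
    { unfold g. eapply Rle_trans; [apply dup|].
      - split; [apply positivity; auto; lra|]. pose proof (u_le_Ps t l (Rlt_le _ _ Ht) Hl). lra.
      - apply Rmult_le_compat_l; [lra|]. apply pow_incr. split; [apply positivity; auto; lra|].
        apply u_le_Ps; auto; lra. }
    specialize (Hg l Hl).
    assert (0 <= K0 * Ps t ^ (pstar - 1)) by (apply Rmult_le_pos; [lra| apply pow_le; auto]).
    pose proof (pos_INR k). nra. }
  lra.
Qed.


Lemma fsum_const_ge n f M : (forall i, (i < n)%nat -> M <= f i) -> INR n * M <= fsum n f.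
Proof. intros H. rewrite <- fsum_const. apply fsum_le. exact H. Qed.

Lemma Ps0_bounds : 0 < Ps 0 /\ INR k * (c1 / sqrt (INR d)) <= Ps 0 <= INR k * (c2 / sqrt (INR d)).
Proof.
  split; [|split].
  - assert (Hu0 : 0 < u 0 0) by (apply u_init; lia).
    assert (u 0 0 <= Ps 0).
    { apply (fsum_ge_term k (fun j => u j 0)); [|lia]. intros j Hj. apply Rlt_le, u_init; auto. }
    lra.
  - apply fsum_const_ge. intros j Hj. apply u_init; auto.
  - apply fsum_const_le. intros j Hj. apply u_init; auto.
Qed.

Definition kap' := 1/2 * kappa * (/ INR k) ^ (pstar - 1).

Lemma kap'_pos : 0 < kap'.
Proof.
  unfold kap'. pose proof kappa_pos. pose proof INRk_pos.
  apply Rmult_lt_0_compat; [lra|]. apply pow_lt. apply Rinv_0_lt_compat; lra.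
Qed.

Lemma dPs_lower' t : 0 < t -> Ps t <= r0 -> kap' * Ps t ^ (pstar - 1) <= dPs t.
Proof.
  intros Ht HP. pose proof (dPs_lower t Ht HP). unfold kap'.
  rewrite Rpow_mult_distr in H. lra.
Qed.

Lemma cont_lin_comb (c0 c : R) (f : R -> R) t : continuous f t -> continuous (fun s => c0 + c * f s) t.
Proof.
  intros Hf. apply continuous_plus_R; [apply continuous_const_R|].
  apply continuous_mult_R; [apply continuous_const_R| exact Hf].
Qed.

Lemma persist t1 T : 0 <= t1 -> t1 <= T -> r0 <= Ps t1 -> r0 <= Ps T.
Proof.
  intros Ht1 HT HP1.
  assert (r0 + -1 * Ps T <= 0); [|lra].
  apply (barrier (fun t => r0 + -1 * Ps t) (fun t => 0 + -1 * dPs t) t1 T 1); auto; try lra.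
  - apply cont_lin_comb. apply Ps_cont.
  - intros t Ht. apply is_derive_plus_R; [apply is_derive_const_R|].
    apply is_derive_scal. apply Ps_deriv. lra.
  - intros t Ht [Hh1 _]. pose proof (dPs_lower' t ltac:(lra) ltac:(lra)).
    pose proof kap'_pos. assert (0 <= Ps t ^ (pstar - 1)) by (apply pow_le, Ps_nonneg; lra).
    nra.
Qed.

Lemma below_mono T : 0 <= T -> (forall t, 0 <= t <= T -> Ps t < r0) ->
  forall t, 0 <= t <= T -> Ps 0 <= Ps t.
Proof.
  intros HT Hall t Ht.
  assert (Ps 0 + -1 * Ps t <= 0); [|lra].
  apply (barrier (fun s => Ps 0 + -1 * Ps s) (fun s => 0 + -1 * dPs s) 0 t 1); try lra.
  - apply cont_lin_comb. apply Ps_cont.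
  - intros s Hs. apply is_derive_plus_R; [apply is_derive_const_R|].
    apply is_derive_scal. apply Ps_deriv. lra.
  - intros s Hs _. assert (Ps s < r0) by (apply Hall; lra).
    pose proof (dPs_lower' s ltac:(lra) ltac:(lra)).
    pose proof kap'_pos. assert (0 <= Ps s ^ (pstar - 1)) by (apply pow_le, Ps_nonneg; lra).
    nra.
Qed.

Lemma escape3 T : (3 <= pstar)%nat -> 0 <= T -> (forall t, 0 <= t <= T -> Ps t < r0) ->
  kap' * INR (pstar - 2) * T < (/ Ps 0) ^ (pstar - 2).
Proof.
  intros Hp3 HT Hall. set (n := (pstar - 2)%nat).
  destruct Ps0_bounds as [HP0 _].
  assert (Hmono := below_mono T HT Hall).
  assert (Hpos : forall t, 0 <= t <= T -> 0 < Ps t) by (intros t Ht; pose proof (Hmono t Ht); lra).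
  set (h := fun t => (/ Ps t) ^ n + (- ((/ Ps 0) ^ n) + kap' * INR n * t)).
  assert (HhT : h T <= 0).
  { apply (barrier h (fun t => - INR n * dPs t * (/ Ps t) ^ (S n) + (0 + kap' * INR n * 1)) 0 T 1);
      try lra.
    - unfold h. apply continuous_plus_R.
      + apply continuous_ipow; [apply Ps_cont| lra].
      + apply (cont_lin_comb _ _ (fun t => t)). apply continuous_id.
    - intros t Ht. unfold h. apply is_derive_plus_R.
      + apply is_derive_ipow; [unfold n; lia| apply Rgt_not_eq, Hpos; lra| apply Ps_deriv; lra].
      + apply is_derive_plus_R; [apply is_derive_const_R|]. apply is_derive_scal, is_derive_id_R.
    - unfold h. ring_simplify. lra.
    - intros t Ht _.
      assert (HPt : 0 < Ps t) by (apply Hpos; lra).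
      assert (Hlow := dPs_lower' t ltac:(lra) ltac:(pose proof (Hall t ltac:(lra)); lra)).
      replace (pstar - 1)%nat with (S n) in Hlow by (unfold n; lia).
      pose proof (pow_inv_mul (Ps t) (S n) ltac:(lra)) as Hinv.
      assert (0 < (/ Ps t) ^ S n) by (apply pow_lt, Rinv_0_lt_compat; lra).
      assert (0 < INR n) by (apply lt_0_INR; unfold n; lia).
      assert (Hfin : kap' * Ps t ^ S n * (/ Ps t) ^ S n <= dPs t * (/ Ps t) ^ S n) by
        (apply Rmult_le_compat_r; lra).
      rewrite Rmult_assoc, Hinv in Hfin. nra. }
  unfold h in HhT.
  assert (0 < (/ Ps T) ^ n) by (apply pow_lt, Rinv_0_lt_compat, Hpos; lra).
  lra.
Qed.

Lemma escape2 T : pstar = 2%nat -> 0 <= T -> (forall t, 0 <= t <= T -> Ps t < r0) ->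
  ln (Ps 0) + kap' * T < ln r0.
Proof.
  intros Hp2 HT Hall.
  destruct Ps0_bounds as [HP0 _].
  assert (Hmono := below_mono T HT Hall).
  assert (Hpos : forall t, 0 <= t <= T -> 0 < Ps t) by (intros t Ht; pose proof (Hmono t Ht); lra).
  set (h := fun t => ln (Ps 0) + kap' * t + -1 * ln (Ps t)).
  assert (HhT : h T <= 0).
  { apply (barrier h (fun t => 0 + kap' * 1 + -1 * (/ Ps t * dPs t)) 0 T 1); try lra.
    - unfold h. apply continuous_plus_R.
      + apply (cont_lin_comb _ _ (fun t => t)). apply continuous_id.
      + apply continuous_mult_R; [apply continuous_const_R|].
        apply continuous_ln_comp; [apply Ps_cont| lra].
    - intros t Ht. unfold h. apply is_derive_plus_R.
      + apply is_derive_plus_R; [apply is_derive_const_R|]. apply is_derive_scal, is_derive_id_R.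
      + apply is_derive_scal. apply (is_derive_comp_R ln Ps).
        * apply is_derive_ln. apply Hpos; lra.
        * apply Ps_deriv; lra.
    - unfold h. ring_simplify. lra.
    - intros t Ht _.
      assert (HPt : 0 < Ps t) by (apply Hpos; lra).
      assert (Hlow := dPs_lower' t ltac:(lra) ltac:(pose proof (Hall t ltac:(lra)); lra)).
      rewrite Hp2 in Hlow. simpl in Hlow. rewrite Rmult_1_r in Hlow.
      assert (kap' <= / Ps t * dPs t).
      { apply (Rmult_le_reg_l (Ps t)); auto. rewrite <- Rmult_assoc, Rinv_r by lra. lra. }
      lra. }
  unfold h in HhT.
  assert (ln (Ps T) < ln r0) by (apply ln_increasing; [apply Hpos; lra| apply Hall; lra]).
  lra.
Qed.

Definition KN := INR k * INR k * K0.

Lemma KN_pos : 0 < KN.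
Proof. unfold KN. pose proof INRk_pos. pose proof K0_pos. apply Rmult_lt_0_compat; [nra|lra]. Qed.

Lemma nec3 T dl : (3 <= pstar)%nat -> 0 <= T -> 0 < dl <= r0 ->
  KN * INR (pstar - 2) * T <= (/ (2 * Ps 0)) ^ (pstar - 2) / 2 ->
  (/ dl) ^ (pstar - 2) <= (/ (2 * Ps 0)) ^ (pstar - 2) / 4 ->
  forall t, 0 <= t <= T -> Ps t < dl.
Proof.
  intros Hp3 HT Hdl H1 H2 t Ht. set (n := (pstar - 2)%nat) in *.
  destruct Ps0_bounds as [HP0 _].
  set (y0 := (/ (2 * Ps 0)) ^ n) in *.
  set (Z := fun s => Ps s + Ps 0).
  assert (HZ : forall s, 0 <= s -> Ps 0 <= Z s) by (intros s Hs; unfold Z; pose proof (Ps_nonneg s Hs); lra).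
  assert (0 < INR n) by (apply lt_0_INR; unfold n; lia).
  assert (Hy0 : 0 < y0) by (apply pow_lt, Rinv_0_lt_compat; lra).
  set (h := fun s => y0 + - KN * INR n * s + -1 * (/ Z s) ^ n).
  assert (Hht : h t <= 0).
  { apply (barrier h (fun s => 0 + - KN * INR n * 1 + -1 * (- INR n * dPs s * (/ Z s) ^ (S n)))
            0 t (y0 / 4)); try lra.
    - unfold h. apply continuous_plus_R.
      + apply (cont_lin_comb _ _ (fun t => t)). apply continuous_id.
      + apply continuous_mult_R; [apply continuous_const_R|].
        apply continuous_ipow.
        * unfold Z. apply continuous_plus_R; [apply Ps_cont| apply continuous_const_R].
        * pose proof (HZ 0 ltac:(lra)). lra.
    - intros s Hs. unfold h. apply is_derive_plus_R.
      + apply is_derive_plus_R; [apply is_derive_const_R|]. apply is_derive_scal, is_derive_id_R.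
      + apply is_derive_scal. apply is_derive_ipow; [unfold n; lia| pose proof (HZ s ltac:(lra)); lra|].
        unfold Z. apply (is_derive_eq _ _ (dPs s + 0)); [|ring].
        apply is_derive_plus_R; [apply Ps_deriv; lra| apply is_derive_const_R].
    - unfold h. unfold Z. replace (Ps 0 + Ps 0) with (2 * Ps 0) by ring. fold y0. ring_simplify. lra.
    - intros s Hs [_ Hh].
      assert (HZs : 0 < Z s) by (pose proof (HZ s ltac:(lra)); lra).
      assert (Hsm : Z s < dl).
      { apply (inv_pow_lt_imp _ _ n); try lra.
        unfold h in Hh. assert (KN * INR n * s <= KN * INR n * T).
        { apply Rmult_le_compat_l; [pose proof KN_pos; nra| lra]. }
        lra. }
      assert (HPs : Ps s <= r0) by (unfold Z in Hsm; lra).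
      assert (Hup := dPs_upper s ltac:(lra) HPs).
      replace (pstar - 1)%nat with (S n) in Hup by (unfold n; lia).
      assert (Ps s ^ S n <= Z s ^ S n).
      { apply pow_incr. split; [apply Ps_nonneg; lra| unfold Z; lra]. }
      pose proof (pow_inv_mul (Z s) (S n) ltac:(lra)) as Hinv.
      assert (0 < (/ Z s) ^ S n) by (apply pow_lt, Rinv_0_lt_compat; lra).
      pose proof KN_pos.
      assert (Hfin : dPs s * (/ Z s) ^ S n <= KN * Z s ^ S n * (/ Z s) ^ S n).
      { apply Rmult_le_compat_r; [lra|]. fold KN in Hup.
        apply Rle_trans with (KN * Ps s ^ S n); [lra|]. apply Rmult_le_compat_l; lra. }
      rewrite Rmult_assoc, Hinv in Hfin. nra. }
  unfold h in Hht.
  assert (KN * INR n * t <= KN * INR n * T).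
  { apply Rmult_le_compat_l; [pose proof KN_pos; nra| lra]. }
  assert (HZt : Z t < dl).
  { apply (inv_pow_lt_imp _ _ n); try lra. pose proof (HZ t ltac:(lra)). lra. }
  unfold Z in HZt. lra.
Qed.

Lemma nec2 T dl : pstar = 2%nat -> 0 <= T -> 0 < dl <= r0 ->
  ln (2 * Ps 0) + KN * T + 1 <= ln dl ->
  forall t, 0 <= t <= T -> Ps t < dl.
Proof.
  intros Hp2 HT Hdl H1 t Ht.
  destruct Ps0_bounds as [HP0 _].
  set (Z := fun s => Ps s + Ps 0).
  assert (HZ : forall s, 0 <= s -> Ps 0 <= Z s) by (intros s Hs; unfold Z; pose proof (Ps_nonneg s Hs); lra).
  set (h := fun s => ln (Z s) + (- ln (2 * Ps 0) + - KN * s)).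
  assert (Hht : h t <= 0).
  { apply (barrier h (fun s => / Z s * (dPs s + 0) + (0 + - KN * 1)) 0 t 1); try lra.
    - unfold h. apply continuous_plus_R.
      + apply continuous_ln_comp.
        * unfold Z. apply continuous_plus_R; [apply Ps_cont| apply continuous_const_R].
        * pose proof (HZ 0 ltac:(lra)). lra.
      + apply (cont_lin_comb _ _ (fun t => t)). apply continuous_id.
    - intros s Hs. unfold h. apply is_derive_plus_R.
      + apply (is_derive_comp_R ln Z).
        * apply is_derive_ln. pose proof (HZ s ltac:(lra)). lra.
        * unfold Z. apply is_derive_plus_R; [apply Ps_deriv; lra| apply is_derive_const_R].
      + apply is_derive_plus_R; [apply is_derive_const_R|]. apply is_derive_scal, is_derive_id_R.
    - unfold h, Z. replace (Ps 0 + Ps 0) with (2 * Ps 0) by ring. lra.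
    - intros s Hs [_ Hh].
      assert (HZs : 0 < Z s) by (pose proof (HZ s ltac:(lra)); lra).
      assert (Hsm : Z s < dl).
      { apply ln_lt_inv; try lra. unfold h in Hh.
        pose proof KN_pos. assert (KN * s <= KN * T) by (apply Rmult_le_compat_l; lra). lra. }
      assert (HPs : Ps s <= r0) by (unfold Z in Hsm; lra).
      assert (Hup := dPs_upper s ltac:(lra) HPs).
      rewrite Hp2 in Hup. simpl in Hup. rewrite Rmult_1_r in Hup. fold KN in Hup.
      pose proof KN_pos.
      assert (KN * Ps s <= KN * Z s) by (apply Rmult_le_compat_l; [lra| unfold Z; lra]).
      assert (/ Z s * (dPs s + 0) <= KN).
      { apply (Rmult_le_reg_l (Z s)); auto. rewrite <- Rmult_assoc, Rinv_r by lra. lra. }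
      lra. }
  unfold h in Hht.
  assert (HZt0 : 0 < Z t) by (pose proof (HZ t ltac:(lra)); lra).
  assert (ln (Z t) < ln dl).
  { pose proof KN_pos. assert (KN * t <= KN * T) by (apply Rmult_le_compat_l; lra). lra. }
  assert (HZd : Z t < dl) by (apply ln_lt_inv; lra).
  unfold Z in HZd. lra.
Qed.

Lemma unorm_upper t : 0 <= t -> unorm d k V w t <= sqrt (INR k).
Proof.
  intros Ht. rewrite unorm_eq by exact Ht. apply sqrt_le_1_alt.
  replace (INR k) with (INR k * 1) by ring. apply fsum_const_le. intros j Hj.
  pose proof (u_bound j t Hj). nra.
Qed.

Lemma unorm_lower t : 0 <= t -> r0 <= Ps t -> r0 / INR k <= unorm d k V w t.
Proof.
  intros Ht HP. rewrite unorm_eq by exact Ht. pose proof INRk_pos. pose proof r0_pos.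
  destruct (fsum_exists_ge k (fun j => u j t) (Ps t * / INR k)) as [j [Hj Hju]].
  { lia. }
  { unfold Ps. right. field. lra. }
  assert (r0 / INR k <= u j t).
  { unfold Rdiv. eapply Rle_trans; [|exact Hju]. apply Rmult_le_compat_r; [left; apply Rinv_0_lt_compat|]; lra. }
  assert (0 < r0 / INR k) by (apply Rdiv_lt_0_compat; lra).
  rewrite <- (sqrt_square (r0 / INR k)) by lra. apply sqrt_le_1_alt.
  eapply Rle_trans; [|apply (fsum_ge_term k (fun j => u j t * u j t) j)].
  - nra.
  - intros i Hi. pose proof (positivity t Ht i Hi). nra.
  - exact Hj.
Qed.

Lemma unorm_le_Ps t : 0 <= t -> unorm d k V w t <= Ps t.
Proof.
  intros Ht. rewrite unorm_eq by exact Ht. pose proof (Ps_nonneg t Ht).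
  rewrite <- (sqrt_square (Ps t)) by lra. apply sqrt_le_1_alt.
  unfold Ps at 2. rewrite <- fsum_scal.
  apply fsum_le. intros j Hj.
  pose proof (positivity t Ht j Hj). pose proof (u_le_Ps t j Ht Hj) as Hle. nra.
Qed.

End Instance.


Lemma lam_pos a b k A c1 c2 d V w lam :
  admissible a b k A c1 c2 d V w -> is_eigenvalue k A lam -> 0 < lam.
Proof.
  intros [_ [Hind [HA _]]] [x [[j0 [Hj0 Hx0]] Hev]].
  set (y := fun m => fsum k (fun j => x j * V j m)).
  assert (Hid : fsum k (fun i => x i * fsum k (fun j => A i j * x j)) = dot d y y).
  { transitivity (fsum k (fun i => x i * fsum d (fun m => V i m * y m))).
    - apply fsum_ext. intros i Hi. f_equal. unfold y.
      rewrite fsum_mix. apply fsum_ext. intros j Hj. rewrite <- HA by auto.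
      unfold dot. ring.
    - transitivity (fsum k (fun i => fsum d (fun m => x i * V i m * y m))).
      + apply fsum_ext. intros i _. rewrite <- fsum_scal. apply fsum_ext. intros; ring.
      + rewrite fsum_swap. unfold dot. apply fsum_ext. intros m _. unfold y at 2.
        rewrite Rmult_comm, <- fsum_scal. apply fsum_ext. intros; ring. }
  assert (Hlhs : fsum k (fun i => x i * fsum k (fun j => A i j * x j)) = lam * fsum k (fun i => x i * x i)).
  { rewrite <- fsum_scal. apply fsum_ext. intros i Hi. rewrite Hev by auto. ring. }
  assert (Hxx : x j0 * x j0 <= fsum k (fun i => x i * x i)).
  { apply (fsum_ge_term k (fun i => x i * x i)); auto. intros; nra. }
  assert (0 < x j0 * x j0) by (apply Rsqr_pos_lt in Hx0; unfold Rsqr in Hx0; exact Hx0).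
  apply Rnot_le_lt. intros Hle.
  assert (Hyy : dot d y y <= 0) by nra.
  assert (Hy0 : forall m, (m < d)%nat -> y m = 0).
  { intros m Hm. assert (y m * y m <= dot d y y).
    { apply (fsum_ge_term d (fun i => y i * y i)); auto. intros; nra. }
    nra. }
  assert (x j0 = 0) by (apply (Hind x); auto).
  contradiction.
Qed.

Lemma nat_above x : exists N : nat, forall d : nat, (N <= d)%nat -> x <= INR d.
Proof.
  destruct (archimed x) as [H1 _].
  exists (Z.to_nat (up x)). intros d Hd.
  apply le_INR in Hd. rewrite INR_IZR_INZ in Hd.
  destruct (Z_le_gt_dec 0 (up x)) as [Hz|Hz].
  - rewrite Z2Nat.id in Hd by exact Hz. lra.
  - assert (IZR (up x) <= 0) by (apply IZR_le; lia).
    pose proof (pos_INR d). lra.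
Qed.

Lemma Rpower_half (x : R) (n : nat) : 0 < x -> (2 <= n)%nat ->
  Rpower x (INR n / 2 - 1) = sqrt x ^ (n - 2).
Proof.
  intros Hx Hn.
  replace (INR n / 2 - 1) with (/ 2 * INR (n - 2)).
  - rewrite <- Rpower_mult, Rpower_sqrt by exact Hx. apply Rpower_pow. apply sqrt_lt_R0; exact Hx.
  - rewrite minus_INR by exact Hn. simpl. field.
Qed.

Lemma ln_sqrt' x : 0 < x -> ln (sqrt x) = / 2 * ln x.
Proof.
  intros Hx. rewrite <- Rpower_sqrt by exact Hx. unfold Rpower. rewrite ln_exp. reflexivity.
Qed.


Lemma pow_ge_self x n : 1 <= x -> (1 <= n)%nat -> x <= x ^ n.
Proof.
  intros Hx Hn. destruct n as [|m]; [lia|]. simpl.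
  pose proof (pow_R1_Rle x m Hx). nra.
Qed.

Lemma ln_Ps0_lower k c d P0 : 0 < INR k * c -> 0 < INR d ->
  INR k * (c / sqrt (INR d)) <= P0 -> ln (INR k * c) - / 2 * ln (INR d) <= ln P0.
Proof.
  intros Hkc Hd H. assert (Hs : 0 < sqrt (INR d)) by (apply sqrt_lt_R0; lra).
  replace (INR k * (c / sqrt (INR d))) with ((INR k * c) * / sqrt (INR d)) in H by (field; lra).
  assert (0 < INR k * c * / sqrt (INR d)) by (apply Rmult_lt_0_compat; [lra| apply Rinv_0_lt_compat; lra]).
  apply ln_le in H; [|lra]. rewrite ln_mult in H by (try lra; apply Rinv_0_lt_compat; lra).
  rewrite ln_Rinv in H by lra. rewrite ln_sqrt' in H by lra. lra.
Qed.

Lemma ln_Ps0_upper k c d P0 : 0 < INR k * c -> 0 < INR d -> 0 < P0 ->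
  P0 <= INR k * (c / sqrt (INR d)) -> ln (2 * P0) <= ln (2 * INR k * c) - / 2 * ln (INR d).
Proof.
  intros Hkc Hd HP H. assert (Hs : 0 < sqrt (INR d)) by (apply sqrt_lt_R0; lra).
  assert (2 * P0 <= (2 * INR k * c) * / sqrt (INR d)).
  { replace ((2 * INR k * c) * / sqrt (INR d)) with (2 * (INR k * (c / sqrt (INR d)))) by (field; lra). lra. }
  apply ln_le in H0; [|lra]. rewrite (ln_mult (2 * INR k * c) (/ sqrt (INR d))) in H0 by (try lra; apply Rinv_0_lt_compat; lra).
  rewrite ln_Rinv in H0 by lra. rewrite ln_sqrt' in H0 by lra. lra.
Qed.

Theorem theorem1
  (k : nat) (A : nat -> nat -> R) (a b : nat -> R) (pstar : nat)
  (Hk : (1 <= k)%nat)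
  (Ha0 : a 0%nat = 0) (Hb0 : b 0%nat = 0)
  (Ha2 : ex_series (fun p => a p ^ 2)) (Hb2 : ex_series (fun p => b p ^ 2))
  (Hpstar : info_exponent b pstar)
  (Hcpos : 0 < ccoef a b pstar)
  (Hcnn : forall p, (pstar <= p)%nat -> 0 <= ccoef a b p)
  (Hsum : exists lam, is_lambda_max k A lam /\
            ex_series (fun p => if (pstar <=? p)%nat
                                then ccoef a b p * INR p * sqrt lam ^ p else 0))
  (Hp2 : (2 <= pstar)%nat) :
  ((3 <= pstar)%nat ->
     escape_time_Theta a b k A
       (fun d => Rpower (INR d) (INR pstar / 2 - 1))) /\
  (pstar = 2%nat ->
     escape_time_Theta a b k A (fun d => ln (INR d))).
Proof.
  assert (hc0 : forall p, (p < pstar)%nat -> ccoef a b p = 0).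
  { intros p Hp. unfold ccoef. destruct p as [|q].
    - rewrite Ha0. ring.
    - destruct Hpstar as [_ [_ Hb]]. rewrite (Hb (S q)) by lia. ring. }
  assert (hcnn : forall p, 0 <= ccoef a b p).
  { intros p. destruct (le_lt_dec pstar p) as [Hp|Hp]; [apply Hcnn; exact Hp| rewrite hc0 by exact Hp; lra]. }
  destruct Hsum as [lam [Hlam Hser]].
  destruct (Rle_lt_dec lam 0) as [Hl0|Hl0].
  { assert (Hno : forall c1 c2 d V w, ~ admissible a b k A c1 c2 d V w).
    { intros c1 c2 d V w Hadm. pose proof (lam_pos a b k A c1 c2 d V w lam Hadm (proj1 Hlam)). lra. }
    split; intros _ c1 c2 _ _; split.
    - exists 1, 1, 1, 0%nat. split; [lra|]. split; [lra|].
      intros d _ V w Hadm. exfalso; eapply Hno; eauto.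
    - intros dl _. exists 1, 0%nat. split; [lra|]. intros d _ V w Hadm. exfalso; eapply Hno; eauto.
    - exists 1, 1, 1, 0%nat. split; [lra|]. split; [lra|].
      intros d _ V w Hadm. exfalso; eapply Hno; eauto.
    - intros dl _. exists 1, 0%nat. split; [lra|]. intros d _ V w Hadm. exfalso; eapply Hno; eauto. }
  set (rho := sqrt lam).
  assert (hrho : 0 < rho) by (apply sqrt_lt_R0; exact Hl0).
  assert (hsum : ex_series (fun p => ccoef a b p * INR p * rho ^ p)).
  { refine (ex_series_ext _ _ _ Hser). intros p.
    destruct (Nat.leb_spec pstar p) as [Hp|Hp]; [reflexivity|].
    rewrite hc0 by exact Hp. rewrite !Rmult_0_l. reflexivity. }
  set (r0 := rr rho).
  assert (Hr0 : 0 < r0) by (apply rr_pos; exact hrho).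
  pose proof (lt_0_INR k ltac:(lia)) as Hk0.
  assert (Hkap : 0 < kap' a b pstar k) by (eapply kap'_pos; eauto).
  assert (HKN : 0 < KN a b pstar k rho) by (eapply KN_pos; eauto).
  split.
  -
    intros Hp3 c1 c2 Hc1 Hc12. set (n := (pstar - 2)%nat).
    assert (Hn : 0 < INR n) by (apply lt_0_INR; unfold n; lia).
    split.
    + set (C := / (kap' a b pstar k * INR n * (INR k * c1) ^ n)).
      assert (HB1 : 0 < (INR k * c1) ^ n) by (apply pow_lt; nra).
      assert (HC : 0 < C) by (unfold C; apply Rinv_0_lt_compat; apply Rmult_lt_0_compat; [nra| lra]).
      exists (r0 / INR k), (sqrt (INR k)), C, 1%nat.
      split; [apply Rdiv_lt_0_compat; lra|]. split; [exact HC|].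
      intros d Hd V w Hadm.
      assert (Hd0 : 0 < INR d) by (apply lt_0_INR; lia).
      cbv beta. rewrite Rpower_half by (auto; lia). fold n.
      set (sd := sqrt (INR d)).
      assert (Hsd : 0 < sd) by (apply sqrt_lt_R0; exact Hd0).
      set (T := C * sd ^ n).
      assert (HT : 0 <= T) by (unfold T; apply Rmult_le_pos; [lra| apply pow_le; lra]).
      split.
      * destruct (classic (exists t1, 0 <= t1 <= T /\ r0 <= Ps k d V w t1)) as [[t1 [Ht1 HPt1]]|Hnot].
        -- assert (r0 <= Ps k d V w T) by (eapply persist with (t1 := t1) (rho := rho); eauto; lra).
           eapply unorm_lower with (rho := rho); eauto.
        -- exfalso.
           assert (Hall : forall t, 0 <= t <= T -> Ps k d V w t < r0).
           { intros t Ht. apply Rnot_le_lt. intros Hle. apply Hnot. exists t. exact (conj Ht Hle). }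
           assert (Hesc : kap' a b pstar k * INR n * T < (/ Ps k d V w 0) ^ n).
           { unfold n. eapply escape3 with (rho := rho); eauto. }
           destruct (Ps0_bounds a b pstar k A c1 c2 d V w Hadm Hk Hp2) as [HP0 [HPl _]].
           fold sd in HPl.
           assert (Hinv : / Ps k d V w 0 <= sd * / (INR k * c1)).
           { replace (sd * / (INR k * c1)) with (/ (INR k * (c1 / sd))) by (field; split; lra).
             apply Rinv_le_contravar; [apply Rmult_lt_0_compat; [lra| apply Rdiv_lt_0_compat; lra]| exact HPl]. }
           assert (Hpw : (/ Ps k d V w 0) ^ n <= (sd * / (INR k * c1)) ^ n).
           { apply pow_incr. split; [left; apply Rinv_0_lt_compat; lra| exact Hinv]. }
           assert (Heq : kap' a b pstar k * INR n * T = (sd * / (INR k * c1)) ^ n).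
           { unfold T, C. rewrite (Rpow_mult_distr sd (/ (INR k * c1))), pow_inv. field. split; lra. }
           lra.
      * eapply unorm_upper; eauto.
    + intros dl Hdl.
      set (dm := Rmin dl r0).
      assert (Hdm : 0 < dm <= r0) by (unfold dm; split; [apply Rmin_glb_lt; lra| apply Rmin_r]).
      set (B := 2 * INR k * c2).
      assert (HB : 0 < B) by (unfold B; nra).
      assert (HBn : 0 < B ^ n) by (apply pow_lt; lra).
      set (X := 4 * (/ dm) ^ n * B ^ n).
      destruct (nat_above (Rmax 1 X ^ 2)) as [N HN].
      set (c := / (2 * KN a b pstar k rho * INR n * B ^ n)).
      assert (Hc : 0 < c) by (unfold c; apply Rinv_0_lt_compat; apply Rmult_lt_0_compat; [nra| lra]).
      exists c, (Nat.max N 1). split; [exact Hc|].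
      intros d Hd V w Hadm t Ht.
      assert (Hd0 : 0 < INR d) by (apply lt_0_INR; lia).
      cbv beta in Ht. rewrite Rpower_half in Ht by (auto; lia). fold n in Ht.
      set (sd := sqrt (INR d)) in *.
      assert (Hsd : 0 < sd) by (apply sqrt_lt_R0; exact Hd0).
      assert (Hsdge : Rmax 1 X <= sd).
      { unfold sd. rewrite <- (sqrt_pow2 (Rmax 1 X)) by (pose proof (Rmax_l 1 X); lra).
        apply sqrt_le_1_alt. apply HN. lia. }
      assert (Hsd1 : 1 <= sd) by (pose proof (Rmax_l 1 X); lra).
      assert (HXsd : X <= sd ^ n).
      { pose proof (Rmax_r 1 X). pose proof (pow_ge_self sd n Hsd1 ltac:(unfold n; lia)). lra. }
      destruct (Ps0_bounds a b pstar k A c1 c2 d V w Hadm Hk Hp2) as [HP0 [_ HPu]].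
      fold sd in HPu.
      set (y0 := (/ (2 * Ps k d V w 0)) ^ n).
      assert (Hy0 : sd ^ n * (/ B) ^ n <= y0).
      { unfold y0. rewrite <- Rpow_mult_distr. apply pow_incr.
        split; [apply Rmult_le_pos; [lra| left; apply Rinv_0_lt_compat; lra]|].
        replace (sd * / B) with (/ (B / sd)) by (field; split; lra).
        apply Rinv_le_contravar; [lra|]. unfold B.
        replace (2 * INR k * c2 / sd) with (2 * (INR k * (c2 / sd))) by (field; lra). lra. }
      assert (HinvB : B ^ n * (/ B) ^ n = 1) by (apply pow_inv_mul; lra).
      assert (Hsdn : 0 < sd ^ n) by (apply pow_lt; lra).
      assert (HiB : 0 < (/ B) ^ n) by (apply pow_lt, Rinv_0_lt_compat; lra).
      assert (Hlt : Ps k d V w t < dm).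
      { eapply (nec3 a b pstar k A c1 c2 d V w Hadm Hk hc0 hcnn Hp2 Hcpos rho hrho hsum (c * sd ^ n) dm);
          eauto.
        - apply Rmult_le_pos; lra.
        - fold n. fold y0.
          assert (KN a b pstar k rho * INR n * (c * sd ^ n) = sd ^ n * (/ B) ^ n / 2).
          { unfold c. rewrite pow_inv. field. split; [lra| split; lra]. }
          lra.
        - fold n. fold y0.
          assert (Hdmn : (/ dm) ^ n = X * (/ B) ^ n / 4).
          { unfold X. replace (4 * (/ dm) ^ n * B ^ n * (/ B) ^ n / 4) with
              ((/ dm) ^ n * (B ^ n * (/ B) ^ n)) by field. rewrite HinvB. ring. }
          rewrite Hdmn. assert (X * (/ B) ^ n <= sd ^ n * (/ B) ^ n) by (apply Rmult_le_compat_r; lra).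
          lra. }
      assert (unorm d k V w t <= Ps k d V w t) by (eapply unorm_le_Ps with (rho := rho); eauto; lra).
      pose proof (Rmin_l dl r0). fold dm in H0. lra.
  -
    intros Hp2e c1 c2 Hc1 Hc12.
    split.
    + set (C := / kap' a b pstar k).
      assert (HC : 0 < C) by (unfold C; apply Rinv_0_lt_compat; lra).
      assert (Hkc : 0 < INR k * c1) by nra.
      destruct (nat_above (Rmax 1 (exp (2 * (ln r0 - ln (INR k * c1)))))) as [N HN].
      exists (r0 / INR k), (sqrt (INR k)), C, (Nat.max N 1).
      split; [apply Rdiv_lt_0_compat; lra|]. split; [exact HC|].
      intros d Hd V w Hadm.
      assert (Hd0 : 0 < INR d) by (apply lt_0_INR; lia).
      assert (HdN := HN d ltac:(lia)).
      assert (Hd1 : 1 <= INR d) by (pose proof (Rmax_l 1 (exp (2 * (ln r0 - ln (INR k * c1))))); lra).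
      assert (Hlnd : 0 <= ln (INR d)) by (rewrite <- ln_1; apply ln_le; lra).
      assert (Hlnd2 : 2 * (ln r0 - ln (INR k * c1)) <= ln (INR d)).
      { rewrite <- (ln_exp (2 * (ln r0 - ln (INR k * c1)))). apply ln_le; [apply exp_pos|].
        pose proof (Rmax_r 1 (exp (2 * (ln r0 - ln (INR k * c1))))). lra. }
      cbv beta. set (T := C * ln (INR d)).
      assert (HT : 0 <= T) by (unfold T; apply Rmult_le_pos; lra).
      split.
      * destruct (classic (exists t1, 0 <= t1 <= T /\ r0 <= Ps k d V w t1)) as [[t1 [Ht1 HPt1]]|Hnot].
        -- assert (r0 <= Ps k d V w T) by (eapply persist with (t1 := t1) (rho := rho); eauto; lra).
           eapply unorm_lower with (rho := rho); eauto.
        -- exfalso.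
           assert (Hall : forall t, 0 <= t <= T -> Ps k d V w t < r0).
           { intros t Ht. apply Rnot_le_lt. intros Hle. apply Hnot. exists t. exact (conj Ht Hle). }
           assert (Hesc : ln (Ps k d V w 0) + kap' a b pstar k * T < ln r0).
           { eapply escape2 with (rho := rho); eauto. }
           destruct (Ps0_bounds a b pstar k A c1 c2 d V w Hadm Hk Hp2) as [HP0 [HPl _]].
           pose proof (ln_Ps0_lower k c1 d _ Hkc Hd0 HPl).
           assert (kap' a b pstar k * T = ln (INR d)) by (unfold T, C; field; lra).
           lra.
      * eapply unorm_upper; eauto.
    + intros dl Hdl.
      set (dm := Rmin dl r0).
      assert (Hdm : 0 < dm <= r0) by (unfold dm; split; [apply Rmin_glb_lt; lra| apply Rmin_r]).
      assert (Hkc : 0 < INR k * c2) by nra.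
      set (E := 4 * (ln (2 * INR k * c2) + 1 - ln dm)).
      destruct (nat_above (Rmax 1 (exp E))) as [N HN].
      set (c := / (4 * KN a b pstar k rho)).
      assert (Hc : 0 < c) by (unfold c; apply Rinv_0_lt_compat; lra).
      exists c, (Nat.max N 1). split; [exact Hc|].
      intros d Hd V w Hadm t Ht.
      assert (Hd0 : 0 < INR d) by (apply lt_0_INR; lia).
      assert (HdN := HN d ltac:(lia)).
      assert (Hd1 : 1 <= INR d) by (pose proof (Rmax_l 1 (exp E)); lra).
      assert (Hlnd : 0 <= ln (INR d)) by (rewrite <- ln_1; apply ln_le; lra).
      assert (HlnE : E <= ln (INR d)).
      { rewrite <- (ln_exp E). apply ln_le; [apply exp_pos|]. pose proof (Rmax_r 1 (exp E)). lra. }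
      cbv beta in Ht.
      destruct (Ps0_bounds a b pstar k A c1 c2 d V w Hadm Hk Hp2) as [HP0 [_ HPu]].
      pose proof (ln_Ps0_upper k c2 d _ Hkc Hd0 HP0 HPu) as Hln.
      assert (Hlt : Ps k d V w t < dm).
      { eapply (nec2 a b pstar k A c1 c2 d V w Hadm Hk hc0 hcnn Hp2 Hcpos rho hrho hsum (c * ln (INR d)) dm);
          eauto.
        - apply Rmult_le_pos; lra.
        - assert (KN a b pstar k rho * (c * ln (INR d)) = / 4 * ln (INR d)) by (unfold c; field; lra).
          unfold E in HlnE. lra. }
      assert (unorm d k V w t <= Ps k d V w t) by (eapply unorm_le_Ps with (rho := rho); eauto; lra).
      pose proof (Rmin_l dl r0). fold dm in H0. lra.
Qed.
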